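(* Let $K$ be a field of characteristic $\neq2$ with involution $a\mapsto\bar a$ (possibly the identity), and let $p(x)\in K[x]$ be an irreducible polynomial with $p(x)=p^\vee(x)$ of degree $2r$ or $2r+1$. Consider the field $K(\kappa)=K[x]/p(x)K[x]$ ($\kappa$ the class of $x$) with involution $f(\kappa)^\circ=\bar f(\kappa^{-1})$. Then every element $c\in K(\kappa)$ with $c^\circ=c$ is uniquely representable in the form $q(\kappa)$, where $q(x)=\bar a_rx^{-r}+\dots+\bar a_1x^{-1}+a_0+a_1x+\dots+a_rx^r$ with $a_0=\bar a_0$, $a_1,\dots,a_r\in K$, and, when $\deg p=2r$: (a) $a_r=0$ if the involution on $K$ is the identity; (b) $a_r=\bar a_r$ if the involution on $K$ is nonidentity and $p(0)\ne1$; (c) $a_r=-\bar a_r$ if the involution on $K$ is nonidentity and $p(0)=1$.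
   Context: For $f(x)=a_0x^n+\dots+a_n\in K[x]$: $\bar f(x)=\bar a_0x^n+\dots+\bar a_n$, and if $a_n\ne0$, $f^\vee(x)=\bar a_n^{-1}(\bar a_nx^n+\dots+\bar a_1x+\bar a_0)$. The involution $f(\kappa)^\circ=\bar f(\kappa^{-1})$ is well defined because $p=p^\vee$. *)

(* Defs.v *)
From HB Require Import structures.
From mathcomp Require Import all_boot all_order all_algebra.
Set Implicit Arguments. Unset Strict Implicit. Unset Printing Implicit Defensive.
Import GRing.Theory.
Local Open Scope ring_scope.

(* f^vee(x) = conj(f(0))^-1 * (conj a_n x^n + ... + conj a_1 x + conj a_0)
   where f(x) = a_0 x^n + ... + a_n, i.e. the coefficient of x^i in the
   bracket is the conjugate of the coefficient of x^(n-i) in f. *)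
Definition pvee (K : fieldType) (conj : K -> K) (f : {poly K}) : {poly K} :=
  (conj f`_0)^-1 *: \poly_(i < size f) conj f`_((size f).-1 - i).

Definition qc (K : fieldType) (p : {poly K}) (a : K) : {poly %/ p} :=
  in_qpoly p a%:P.

Definition kappa (K : fieldType) (p : {poly K}) : {poly %/ p} := in_qpoly p 'X.

Definition qeval (K : fieldType) (p : {poly K}) (f : {poly K}) (y : {poly %/ p})
  : {poly %/ p} := (map_poly (qc p) f).[y].

(* the involution  f(kappa)^o = fbar(kappa^-1)  on K(kappa) = K[x]/(p);
   c is represented by the polynomial (c : {poly K}) with c = c(kappa). *)
Definition qinvol (K : fieldType) (conj : K -> K) (p : {poly K})
  (c : {poly %/ p}) : {poly %/ p} :=
  qeval (map_poly conj (c : {poly K})) (kappa p)^-1.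

Definition laurent_sym (K : fieldType) (conj : K -> K) (p : {poly K}) (r : nat)
  (a : {ffun 'I_r.+1 -> K}) : {poly %/ p} :=
  qc p (a ord0) +
  \sum_(i < r.+1 | i != ord0)
     (qc p (a i) * kappa p ^+ i + qc p (conj (a i)) * (kappa p ^+ i)^-1).

(* Main.v *)
From HB Require Import structures.
From mathcomp Require Import all_boot all_order all_algebra.
Require Import Defs.
From Stdlib Require Import Classical.
From mathcomp Require Import ring.
Import GRing.Theory.
Set Implicit Arguments. Unset Strict Implicit. Unset Printing Implicit Defensive.
Local Open Scope ring_scope.

Section L7.
Variables (K : fieldType) (conj : {rmorphism K -> K}).
Hypothesis conj_invol : involutive conj.
Hypothesis char_ne2 : (2%:R : K) != 0.
Variable p : {poly K}.
Hypothesis p_irr : irreducible_poly p.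
Hypothesis p0_ne0 : p`_0 != 0.
Hypothesis p_self : p = pvee conj p.

Local Notation n := (size p).-1.
Local Notation m := (in_qpoly p).
Local Notation k := (kappa p).

Lemma sizep : size p = n.+1.
Proof. by case: p_irr; case: (size p). Qed.

Lemma n_gt0 : (0 < n)%N.
Proof. by case: p_irr; case: (size p) => [|[]]. Qed.

Lemma pcoef j : (j <= n)%N -> p`_j = (conj p`_0)^-1 * conj p`_(n - j).
Proof.
move=> hj; have := congr1 (fun q : {poly K} => q`_j) p_self.
by rewrite {1}/pvee coefZ coef_poly sizep ltnS hj.
Qed.

Lemma cp0_ne0 : conj p`_0 != 0.
Proof. by rewrite fmorph_eq0. Qed.

Lemma plead : p`_n = 1.
Proof. by rewrite pcoef // subnn mulVf // cp0_ne0. Qed.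

Lemma pmonic : p \is monic.
Proof. by rewrite monicE /lead_coef plead. Qed.

Lemma p0conj : p`_0 * conj p`_0 = 1.
Proof. by rewrite {1}pcoef // subn0 plead rmorph1 mulr1 mulVf // cp0_ne0. Qed.

Lemma mkm : mk_monic p = p.
Proof. by rewrite /mk_monic pmonic sizep ltnS n_gt0. Qed.

Lemma mE (f : {poly K}) : (m f : {poly K}) = f %% p.
Proof. by rewrite /= mkm Pdiv.IdomainMonic.modpE // pmonic. Qed.

Lemma m0 (f : {poly K}) : (m f = 0) <-> (p %| f).
Proof.
split => [h|h]; first by apply/modp_eq0P; rewrite -mE h.
by apply: val_inj; rewrite /= -[LHS]/(m f : {poly K}) mE modp_eq0.
Qed.

Lemma cE (c : {poly %/ p}) : m c = c.
Proof.
apply: val_inj; rewrite /= -[LHS]/(m c : {poly K}) mE modp_small //.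
apply: (leq_trans (size_mk_monic c)); by rewrite mkm.
Qed.

Lemma mX : m 'X = k. Proof. by []. Qed.
Lemma mC a : m a%:P = qc p a. Proof. by []. Qed.

Lemma msum (f : {poly K}) N : (size f <= N)%N -> m f = \sum_(i < N) qc p f`_i * k ^+ i.
Proof.
move=> hs; have hf : f = \poly_(i < N) f`_i.
  apply/polyP => i; rewrite coef_poly; case: ltnP => // h.
  by rewrite nth_default // (leq_trans hs h).
rewrite {1}hf poly_def rmorph_sum; apply: eq_bigr => i _.
by rewrite -mul_polyC rmorphM rmorphXn.
Qed.

Lemma qcM a b : qc p (a * b) = qc p a * qc p b.
Proof. by rewrite /qc polyCM rmorphM. Qed.
Lemma qcD a b : qc p (a + b) = qc p a + qc p b.
Proof. by rewrite /qc polyCD rmorphD. Qed.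
Lemma qcN a : qc p (- a) = - qc p a.
Proof. by rewrite /qc polyCN rmorphN. Qed.
Lemma qc1 : qc p 1 = 1.
Proof. by rewrite /qc rmorph1. Qed.
Lemma qc0 : qc p 0 = 0.
Proof. by rewrite /qc rmorph0. Qed.

Lemma kunit : k \is a GRing.unit.
Proof.
have ht : take_poly 1 p = (p`_0)%:P.
  by apply/polyP => i; rewrite coef_take_poly coefC; case: i.
have := poly_take_drop 1 p; rewrite ht => hp.
apply/unitrPr; exists (- qc p (p`_0)^-1 * m (drop_poly 1 p)).
have : m ((p`_0)%:P + drop_poly 1 p * 'X^1) = 0 by rewrite hp; apply/m0; exact: dvdpp.
rewrite rmorphD rmorphM rmorphXn expr1 => h0.
have h : qc p p`_0 + m (drop_poly 1 p) * k = 0 := h0.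
rewrite mulrCA (mulrC k) (_ : m (drop_poly 1 p) * k = - qc p p`_0).
  by rewrite mulNr mulrN opprK -qcM mulVf // qc1.
by apply/eqP; rewrite -addr_eq0 addrC h.
Qed.

Definition sig (f : {poly K}) := qeval (map_poly conj f) k^-1.

Lemma qevalE g (y : {poly %/ p}) : qeval g y = (map_poly (in_qpoly p \o polyC) g).[y].
Proof. by []. Qed.

Lemma sigM f g : sig (f * g) = sig f * sig g.
Proof. by rewrite /sig !qevalE !rmorphM hornerM. Qed.

Lemma sigD f g : sig (f + g) = sig f + sig g.
Proof. by rewrite /sig !qevalE !rmorphD hornerD. Qed.

Lemma sigX : sig 'X = k^-1.
Proof. by rewrite /sig qevalE !map_polyX hornerX. Qed.

Lemma sigXn j : sig ('X^j) = k^-1 ^+ j.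
Proof. by rewrite /sig qevalE !rmorphXn /= !map_polyX hornerXn. Qed.

Lemma sig_sum (f : {poly K}) N : (size f <= N)%N ->
  sig f = \sum_(i < N) qc p (conj f`_i) * k^-1 ^+ i.
Proof.
move=> hs; rewrite /sig qevalE (horner_coef_wide _ (n:=N)); last first.
  by rewrite !size_map_poly.
by apply: eq_bigr => i _; rewrite !coef_map.
Qed.

Lemma kVXk i N : (i <= N)%N -> k^-1 ^+ i * k ^+ N = k ^+ (N - i).
Proof.
move=> h; rewrite -{1}(subnK h) exprD exprVn mulrCA mulVr ?mulr1 //.
by rewrite unitrX // kunit.
Qed.

Lemma sig_rev (f : {poly K}) N : (size f <= N.+1)%N ->
  sig f * k ^+ N = m (\poly_(i < N.+1) conj f`_(N - i)).
Proof.
move=> hs; rewrite (sig_sum hs) (msum (size_poly _ _)) mulr_suml.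
rewrite [RHS](reindex_inj rev_ord_inj); apply: eq_bigr => i _ /=.
have hi : (i <= N)%N by rewrite -ltnS ltn_ord.
rewrite coef_poly subSS ltnS leq_subr subKn // -mulrA kVXk //.
Qed.

Lemma sigp : sig p = 0.
Proof.
have h := @sig_rev p n (eq_leq sizep).
have e : \poly_(i < n.+1) conj p`_(n - i) = conj p`_0 *: p.
  apply/polyP => i; rewrite coef_poly coefZ; case: ltnP => hi.
    by rewrite (pcoef (j:=i)) // mulrA mulfV ?mul1r // cp0_ne0.
  by rewrite [p`_i]nth_default ?mulr0 // sizep.
have : m (conj p`_0 *: p) = 0 by apply/m0; rewrite dvdpZr ?cp0_ne0.
rewrite -e -h => h0.
by rewrite -[sig p](mulrK (unitrX n kunit)) h0 mul0r.
Qed.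

Lemma sig_mod f : sig f = sig (f %% p).
Proof. by rewrite {1}(divp_eq f p) sigD sigM sigp mulr0 add0r. Qed.


Definition Lp r (a : {ffun 'I_r.+1 -> K}) : {poly K} :=
  \poly_(j < (2 * r).+1)
     (if (r <= j)%N then a (inord (j - r)%N) else conj (a (inord (r - j)%N))).

Lemma Lsum r (a : {ffun 'I_r.+1 -> K}) :
  laurent_sym conj p a * k ^+ r = m (Lp a).
Proof.
set al := fun j : nat => a (inord j).
have alE (x : 'I_r.+1) : a x = al x by rewrite /al inord_val.
set F := fun j : nat =>
  qc p (if (r <= j)%N then al (j - r)%N else conj (al (r - j)%N)) * k ^+ j.
rewrite (msum (size_poly _ _)).
transitivity (\sum_(0 <= j < (2 * r).+1) F j).
  2: by rewrite big_mkord; apply: eq_bigr => j _; rewrite coef_poly ltn_ord.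
rewrite (big_cat_nat _ (n:=r)) //=; last first.
  by rewrite mul2n -addnn ltnW // ltnS leq_addl.
have -> : \sum_(r <= i < (2 * r).+1) F i = \sum_(0 <= i < r.+1) F (i + r)%N.
  have -> : \sum_(r <= i < (2 * r).+1) F i = \sum_(0 + r <= i < (2 * r).+1) F i by [].
  by rewrite big_addn mul2n -addnn -addSn addnK.
rewrite big_nat_recl // big_nat_rev /=.
rewrite /laurent_sym mulrDl mulr_suml big_mkcond big_ord_recl /= add0r.
rewrite alE /F add0n leqnn subnn.
rewrite addrCA; congr (_ + _).
rewrite -big_split /= big_mkord; apply: eq_bigr => i _.
have hi : (i.+1 <= r)%N := ltn_ord i.
have h1 : (r - i.+1 < r)%N by rewrite ltn_subrL /= (leq_trans _ hi).
rewrite leqNgt h1 /= subKn // leq_addl addnK alE /= /bump /= add1n.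
rewrite mulrDl addrC -!mulrA -exprD -exprVn kVXk //.
Qed.


Lemma Lsym r (F : {poly K}) : (size F <= (2 * r).+1)%N ->
  (forall j, (j <= 2 * r)%N -> conj F`_(2 * r - j) = F`_j) ->
  Lp [ffun i : 'I_r.+1 => F`_(r + i)] = F.
Proof.
move=> hs hF; apply/polyP => j; rewrite coef_poly; case: ltnP => hj.
  have h2 : (2 * r = r + r)%N by rewrite mul2n addnn.
  case: leqP => hr; rewrite ffunE inordK.
  - by rewrite subnKC.
  - by rewrite ltnS leq_subLR -h2 -ltnS.
  - by rewrite -(hF j hj) h2 addnBA ?(ltnW hr).
  - by rewrite ltnS leq_subr.
by rewrite nth_default // (leq_trans hs hj).
Qed.

Lemma Lcoef r (a : {ffun 'I_r.+1 -> K}) (i : 'I_r.+1) : (Lp a)`_(r + i) = a i.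
Proof.
rewrite coef_poly leq_addr addKn inord_val.
by rewrite mul2n -addnn ltnS leq_add2l -ltnS ltn_ord.
Qed.

Lemma id_p0 : (forall x, conj x = x) -> ~~ odd n -> p`_0 = 1.
Proof.
move=> cid hev; have h0 := p0conj; rewrite cid in h0.
case: (eqVneq p`_0 1) => // hne; exfalso.
have hm1 : p`_0 = -1.
  have : (p`_0 - 1) * (p`_0 + 1) = 0.
    by rewrite mulrDr mulr1 mulrBl h0 mul1r addrA subrK subrr.
  move/eqP; rewrite mulf_eq0 subr_eq0 (negPf hne) /= addr_eq0 => /eqP //.
have hc j : (j <= n)%N -> p`_j = - p`_(n - j).
  by move=> hj; rewrite pcoef // !cid hm1 invrN invr1 mulN1r.
have hS : p.[1] = - p.[1].
  rewrite (horner_coef_wide _ (eq_leq sizep)).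
  rewrite -sumrN (reindex_inj rev_ord_inj); apply: eq_bigr => i _ /=.
  rewrite !expr1n !mulr1 subSS hc ?leq_subr // subKn //.
  by rewrite -ltnS ltn_ord.
have hr : root p 1.
  apply/eqP; move/eqP: hS; rewrite -subr_eq0 opprK -mulr2n -mulr_natr mulf_eq0.
  by rewrite (negPf char_ne2) orbF => /eqP.
have hd : ('X - 1%:P) %| p by rewrite -root_factor_theorem.
case: p_irr => _ /(_ _ _ hd) h.
have := h (negbT _); rewrite size_XsubC => /(_ erefl) /eqp_size.
by rewrite size_XsubC sizep => -[e]; move: hev; rewrite -e.
Qed.


Definition Pa r (c : {poly %/ p}) (a : {ffun 'I_r.+1 -> K}) : Prop :=
    [/\ laurent_sym conj p a = c,
        conj (a ord0) = a ord0 &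
        (size p).-1 = (2 * r)%N ->
          [/\ (forall x : K, conj x = x) -> a ord_max = 0,
              (exists x : K, conj x != x) -> p`_0 != 1 -> a ord_max = conj (a ord_max) &
              (exists x : K, conj x != x) -> p`_0 = 1 -> a ord_max = - conj (a ord_max)]].

Lemma inord_max r : (inord r : 'I_r.+1) = ord_max.
Proof. by apply/val_inj; rewrite /= inordK. Qed.

Lemma uniq_part r (deg_p : n = (2 * r)%N \/ n = (2 * r).+1) c a1 a2 :
  @Pa r c a1 -> @Pa r c a2 -> a1 = a2.
Proof.
move=> [h1 h01 hc1] [h2 h02 hc2].
set D := Lp a1 - Lp a2.
have hB : m D = m (Lp a1) - m (Lp a2) := rmorphB _ _ _.
have hm : m D = 0 by rewrite hB -!Lsum h1 h2 subrr.
move/m0: hm => hd.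
suff hD : D = 0.
  apply/ffunP => i; rewrite -(Lcoef a1) -(Lcoef a2); apply/eqP.
  by rewrite -subr_eq0 -coefB -/D hD coef0.
apply/eqP; apply: contraT => hD0.
have hsD : (size D <= (2 * r).+1)%N.
  by rewrite (leq_trans (size_polyD _ _)) // size_polyN geq_max !size_poly.
have hle := dvdp_leq hD0 hd.
have hn : n = (2 * r)%N.
  have := leq_trans hle hsD; rewrite sizep ltnS.
  by case: deg_p => // ->; rewrite ltnn.
have hr0 : (0 < r)%N by move: n_gt0; rewrite hn muln_gt0.
have hsp : size D = size p by apply/eqP; rewrite eqn_leq hle sizep hn hsD.
have heq : p %= D by rewrite -dvdp_size_eqp // hsp.
have := eqp_eq heq; rewrite (monicP pmonic) scale1r => hDl.
set l := lead_coef D in hDl.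
have e2 : l = a1 ord_max - a2 ord_max.
  have := congr1 (fun q : {poly K} => q`_(r + r)%N) hDl.
  rewrite coefZ addnn -mul2n -hn plead mulr1 => ->.
  by rewrite hn mul2n -addnn coefB (_ : (r + r)%N = (r + @ord_max r)%N) // !Lcoef.
have e0 : conj l = l * p`_0.
  have := congr1 (fun q : {poly K} => q`_0) hDl; rewrite coefZ => ->.
  rewrite coefB !coef_poly /= leqNgt hr0 /= subn0 inord_max e2.
  by rewrite rmorphB.
have hl : l = 0.
  case: (classic (forall x : K, conj x = x)) => hid.
    have [i1 _ _] := hc1 hn; have [j1 _ _] := hc2 hn.
    by rewrite e2 i1 // j1 // subrr.
  have hex : exists x, conj x != x.
    by case: (not_all_ex_not _ _ hid) => x hx; exists x; apply/eqP.
  case: (eqVneq p`_0 1) => hp0.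
    have [_ _ i3] := hc1 hn; have [_ _ j3] := hc2 hn.
    have c1 : conj (a1 ord_max) = - a1 ord_max by rewrite {2}(i3 hex hp0) opprK.
    have c2 : conj (a2 ord_max) = - a2 ord_max by rewrite {2}(j3 hex hp0) opprK.
    have ec : conj l = - l by rewrite e2 rmorphB c1 c2 opprB opprK addrC.
    move: e0; rewrite hp0 mulr1 ec => /eqP; rewrite -subr_eq0 -opprD oppr_eq0.
    rewrite -mulr2n -mulr_natr mulf_eq0 (negPf char_ne2) orbF => /eqP //.
  have [_ i2 _] := hc1 hn; have [_ j2 _] := hc2 hn.
  have ec : conj l = l by rewrite e2 rmorphB -(i2 hex hp0) -(j2 hex hp0).
  move: e0; rewrite ec => /eqP; rewrite -subr_eq0 -{1}(mulr1 l) -mulrBr mulf_eq0.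
  by rewrite subr_eq0 [1 == _]eq_sym (negPf hp0) orbF => /eqP.
by move: hD0; rewrite -hDl hl scale0r eqxx.
Qed.


Definition symp r (G : {poly K}) :=
  forall j, (j <= 2 * r)%N -> conj G`_(2 * r - j) = G`_j.

Lemma mk_a r c (G : {poly K}) : (size G <= (2 * r).+1)%N -> symp r G ->
  m G = c * k ^+ r ->
  laurent_sym conj p [ffun i : 'I_r.+1 => G`_(r + i)] = c /\
  conj ([ffun i : 'I_r.+1 => G`_(r + i)] ord0) = [ffun i : 'I_r.+1 => G`_(r + i)] ord0.
Proof.
move=> hs hG hm; split.
  apply: (mulIr (unitrX r kunit)); by rewrite Lsum Lsym.
rewrite !ffunE addn0; have := hG r; rewrite mul2n -addnn addnK; apply.
by rewrite leq_addr.
Qed.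

Lemma conj2 : conj (2^-1) = 2^-1.
Proof. by rewrite fmorphV rmorph_nat. Qed.

Lemma cp0E : conj p`_0 = (p`_0)^-1.
Proof. by rewrite -[conj _](mulKf p0_ne0) p0conj mulr1. Qed.

Lemma exist_part r (deg_p : n = (2 * r)%N \/ n = (2 * r).+1) c :
  qinvol conj c = c -> exists a, @Pa r c a.
Proof.
move=> c_sym.
set C : {poly K} := c.
have hC : m C = c := cE c.
have hsC : sig C = c := c_sym.
set E := (C * 'X^r) %% p.
have hmE : m E = c * k ^+ r.
  have -> : m E = m (C * 'X^r).
    have h0 : m (C * 'X^r - E) = 0.
      by apply/m0; rewrite /E {1}(divp_eq (C * 'X^r) p) addrK dvdp_mull // dvdpp.
    have hB : m (C * 'X^r - E) = m (C * 'X^r) - m E := rmorphB _ _ _.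
    by apply/eqP; rewrite eq_sym -subr_eq0 -hB h0.
  have hM : m (C * 'X^r) = m C * m 'X ^+ r.
    by rewrite rmorphM rmorphXn.
  by rewrite hM hC.
have hsE : sig E = c * k^-1 ^+ r by rewrite /E -sig_mod sigM sigXn hsC.
have hszE : (size E <= (2 * r).+1)%N.
  have := ltn_modp (C * 'X^r) p; rewrite (negPf (irredp_neq0 p_irr)) /= sizep ltnS.
  by move=> h; apply: (leq_trans h); case: deg_p => ->.
set R := \poly_(i < (2 * r).+1) conj E`_(2 * r - i).
have hmR : m R = c * k ^+ r.
  rewrite -(sig_rev hszE) hsE -mulrA kVXk; last by rewrite mul2n -addnn leq_addr.
  by rewrite mul2n -addnn addnK.
have hszR : (size R <= (2 * r).+1)%N by rewrite size_poly.
have hr2 : (r <= 2 * r)%N by rewrite mul2n -addnn leq_addr.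
set H := (2^-1) *: (E + R).
have hszH : (size H <= (2 * r).+1)%N.
  by rewrite (leq_trans (size_scale_leq _ _)) // (leq_trans (size_polyD _ _)) // geq_max hszE.
have hsymH : symp r H.
  move=> j hj; rewrite !coefZ !coefD !coef_poly !ltnS leq_subr hj subKn //.
  by rewrite rmorphM rmorphD conj2 conj_invol addrC.
have hmH : m H = c * k ^+ r.
  have hh : m H = qc p (2^-1) * (m E + m R).
    by rewrite /H -mul_polyC rmorphM rmorphD.
  rewrite hh hmE hmR mulrDr -mulrDl -qcD (_ : 2^-1 + 2^-1 = 1) ?qc1 ?mul1r //.
  by field.
set b := H`_(2 * r).
have gen : forall l : K, (n = (2 * r)%N -> conj l = l * p`_0) ->
    (n = (2 * r).+1 -> l = 0) ->
    exists a : {ffun 'I_r.+1 -> K}, [/\ laurent_sym conj p a = c,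
        conj (a ord0) = a ord0 & (n = (2 * r)%N -> a ord_max = b + l)].
  move=> l hl1 hl2.
  have hG : exists G : {poly K}, [/\ (size G <= (2 * r).+1)%N, symp r G, m G = c * k ^+ r
       & (n = (2 * r)%N -> G`_(2 * r) = b + l)].
    case: deg_p => hn.
      exists (H + l *: p); split.
      - rewrite (leq_trans (size_polyD _ _)) // geq_max hszH /=.
        by rewrite (leq_trans (size_scale_leq _ _)) // sizep hn.
      - move=> j hj; rewrite !coefD rmorphD hsymH // !coefZ rmorphM (hl1 hn).
        rewrite (pcoef (j:=j)) ?hn // cp0E invrK -hn mulrA //.
      - have hh : m (H + l *: p) = m H + qc p l * m p.
          by rewrite -mul_polyC rmorphD rmorphM.
        by rewrite hh (proj2 (m0 p) (dvdpp p)) mulr0 addr0 hmH.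
      - move=> _; rewrite coefD (coefZ l) (_ : p`_(2 * r) = 1) ?mulr1 //.
        by rewrite -hn plead.
    exists H; split => //.
    by move=> h2; move: hn; rewrite h2 => /eqP; rewrite eqn_leq ltnn andbF.
  case: hG => G [hs hsy hmG hGm].
  have [h1 h2] := mk_a hs hsy hmG.
  exists [ffun i : 'I_r.+1 => G`_(r + i)]; split => //.
  by move=> hn; rewrite ffunE /= addnn -mul2n hGm.
have neq : (2 * r)%N <> (2 * r).+1 by move/eqP; rewrite eqn_leq ltnn andbF.
have p0n0 : p`_0 != 0 := p0_ne0.
case: deg_p => hn; last first.
  have hg := gen 0 (fun h => False_ind _ (neq (etrans (esym h) hn))) (fun _ => erefl).
  case: hg => a [ha1 ha2 ha3].
  by exists a; split => // hn'; exfalso; exact: neq (etrans (esym hn') hn).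
case: (eqVneq p`_0 1) => hp0.
  pose l := - (2^-1 * (b + conj b)).
  have hl1 : n = (2 * r)%N -> conj l = l * p`_0.
    by move=> _; rewrite hp0 mulr1 /l rmorphN rmorphM conj2 rmorphD conj_invol addrC.
  have [a [ha1 ha2 ha3]] := gen l hl1 (fun h => False_ind _ (neq (etrans (esym hn) h))).
  exists a; split => // hn'; rewrite (ha3 hn'); split.
  - by move=> cid; rewrite /l cid; field.
  - by move=> _; rewrite hp0 eqxx.
  - by move=> _ _; rewrite rmorphD /l rmorphN rmorphM conj2 rmorphD conj_invol; field.
have hp1 : p`_0 - 1 != 0 by rewrite subr_eq0.
pose l := (b - conj b) / (p`_0 - 1).
have hl1 : n = (2 * r)%N -> conj l = l * p`_0.
  move=> _; rewrite /l rmorphM fmorphV !rmorphB rmorph1 conj_invol cp0E; field.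
  by rewrite hp1 p0n0 mulN1r -opprB oppr_eq0 hp1.
have [a [ha1 ha2 ha3]] := gen l hl1 (fun h => False_ind _ (neq (etrans (esym hn) h))).
exists a; split => // hn'; rewrite (ha3 hn'); split.
- move=> cid; exfalso; move: hp0; rewrite id_p0 ?eqxx // hn mul2n odd_double //.
- move=> _ _; rewrite rmorphD /l rmorphM fmorphV !rmorphB rmorph1 conj_invol cp0E; field.
  by rewrite hp1 p0n0 mulN1r -opprB oppr_eq0 hp1.
- by move=> _ h; rewrite h eqxx in hp0.
Qed.

End L7.

Theorem lemma7 (K : fieldType) (conj : {rmorphism K -> K})
  (conj_invol : involutive conj) (char_ne2 : (2%:R : K) != 0)
  (p : {poly K}) (p_irr : irreducible_poly p) (p0_ne0 : p`_0 != 0)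
  (p_self : p = pvee conj p) (r : nat)
  (deg_p : (size p).-1 = (2 * r)%N \/ (size p).-1 = (2 * r).+1)
  (c : {poly %/ p}) (c_sym : qinvol conj c = c) :
  exists! a : {ffun 'I_r.+1 -> K},
    [/\ laurent_sym conj p a = c,
        conj (a ord0) = a ord0 &
        (size p).-1 = (2 * r)%N ->
          [/\ (forall x : K, conj x = x) -> a ord_max = 0,
              (exists x : K, conj x != x) -> p`_0 != 1 -> a ord_max = conj (a ord_max) &
              (exists x : K, conj x != x) -> p`_0 = 1 -> a ord_max = - conj (a ord_max)]].
Proof.
have [a ha] := exist_part conj_invol char_ne2 p_irr p0_ne0 p_self deg_p c_sym.
exists a; split; first exact: ha.
by move=> a' ha'; exact: (uniq_part char_ne2 p_irr p0_ne0 p_self deg_p ha ha').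
Qed.
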